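(* The following hold. (1) For $n\ge 5$, $P_n^3$ is odd prime if and only if $n\in\{5,6,7,9,10,13\}$. (2) For $n\ge 6$, $P_n^4$ is odd prime if and only if $n\in\{6,7\}$. (3) For $n\ge 7$, $P_n^5$ is odd prime if and only if $n=7$. (4) For every $k\ge 6$ and every $n\ge k+2$, $P_n^k$ is not odd prime. (5) For every $k\ge 3$ and every $n\ge k+2$, $C_n^k$ is not odd prime.
   Context: All graphs are finite and simple. A graph $G$ of order $N$ is odd prime if there is a bijection $\ell:V(G)\to\{1,3,\ldots,2N-1\}$ with $\gcd(\ell(u),\ell(v))=1$ for every edge $uv$. For a graph $G$ and $k\ge 1$, the power $G^k$ has vertex set $V(G)$, with $u\ne v$ adjacent iff their distance in $G$ is at most $k$. $P_n$ is the path and $C_n$ the cycle on $n$ vertices. For paths only $n\ge k+2$ is considered, since otherwise $P_n^k$ is complete. *)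

(* Defs.v *)
From mathcomp Require Import all_boot.
Set Implicit Arguments. Unset Strict Implicit. Unset Printing Implicit Defensive.

(* A simple graph is a symmetric irreflexive relation e on a finite type. *)

Fixpoint within (T : finType) (e : rel T) (k : nat) (u v : T) : bool :=
  match k with
  | 0 => u == v
  | k'.+1 => within e k' u v || [exists w, within e k' u w && e w v]
  end.

Definition gpower (T : finType) (e : rel T) (k : nat) : rel T :=
  fun u v => (u != v) && within e k u v.

Definition path_graph (n : nat) : rel 'I_n :=
  fun i j => (i.+1 == j :> nat) || (j.+1 == i :> nat).

Definition cycle_graph (n : nat) : rel 'I_n :=
  fun i j => (j == i.+1 %% n :> nat) || (i == j.+1 %% n :> nat).

(* Odd prime labeling: a bijection f : V -> 'I_N (N = |V|); the label of v
   is l(v) = 2 f(v) + 1, so l is a bijection V -> {1,3,...,2N-1}. *)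
Definition odd_prime (T : finType) (e : rel T) : Prop :=
  exists f : T -> 'I_#|T|, bijective f /\
    forall u v, e u v -> coprime (2 * f u + 1) (2 * f v + 1).
Arguments path_graph n : clear implicits.
Arguments cycle_graph n : clear implicits.

(* Main.v *)
Require Import Defs.
From mathcomp Require Import all_boot zify.

Lemma within_mono (T : finType) (e : rel T) j k u v :
  j <= k -> within e j u v -> within e k u v.
Proof.
elim: k => [|k IH]; first by rewrite leqn0 => /eqP ->.
rewrite leq_eqVlt => /orP [/eqP -> //|Hj] H /=.
by rewrite IH.
Qed.

Lemma within_path_fwd n j (u v : 'I_n) : u + j = v -> within (path_graph n) j u v.
Proof.
elim: j v => [|j IH] v /= Huv.
  by apply/eqP/val_inj; rewrite /= -Huv addn0.
have Hw : u + j < n by have := ltn_ord v; lia.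
apply/orP; right; apply/existsP; exists (Ordinal Hw).
rewrite IH //= /path_graph /= -Huv addnS eqxx //.
Qed.

Lemma within_cycle_fwd n j (u v : 'I_n) : (u + j) %% n = v -> within (cycle_graph n) j u v.
Proof.
have n0 : 0 < n by case: n u {v} => [[]|].
elim: j v => [|j IH] v /= Huv.
  by apply/eqP/val_inj; rewrite /= -Huv addn0 modn_small.
have Hw : (u + j) %% n < n by rewrite ltn_mod.
apply/orP; right; apply/existsP; exists (Ordinal Hw).
rewrite IH //= /cycle_graph /= -Huv.
by rewrite (_ : ((u+j)%%n).+1 %% n = (u+j.+1)%%n) ?eqxx // -addn1 modnDml addn1 addnS.
Qed.

Lemma within_path_close n k (u v : 'I_n) :
  within (path_graph n) k u v -> (u - v <= k) && (v - u <= k).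
Proof.
elim: k v => [|k IH] v /=; first by move=> /eqP ->; rewrite subnn.
case/orP; first by move/IH; lia.
case/existsP => w /andP [/IH Hw]; rewrite /path_graph; case/orP => /eqP; lia.
Qed.

Lemma not_cop a b : 3 %| a -> 3 %| b -> ~~ coprime a b.
Proof.
move=> Ha Hb; apply/negP => /eqP Hg.
have : 3 %| gcdn a b by rewrite dvdn_gcd Ha Hb.
by rewrite Hg.
Qed.

Lemma lower3 {n} {f : 'I_n -> 'I_#|'I_n|} : bijective f ->
  (n + 1) %/ 3 <= #|[set i | 3 %| 2 * f i + 1]|.
Proof.
case=> g fg gf.
have Ht (t : 'I_((n+1) %/ 3)) : 3 * t + 1 < #|'I_n|.
  rewrite card_ord; have := ltn_ord t; lia.
pose h t := g (Ordinal (Ht t)).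
have hinj : injective h.
  move=> t1 t2 /(congr1 f); rewrite /h !gf => /(congr1 val) /= H.
  apply: ord_inj; lia.
rewrite -[X in X <= _]card_ord -(card_imset _ hinj).
apply: subset_leq_card; apply/subsetP => x /imsetP [t _ ->].
rewrite inE /h gf /=.
apply/dvdnP; exists (2 * t + 1); lia.
Qed.

Lemma spread n (S : {set 'I_n}) b L d : 0 < d ->
  (forall s, s \in S -> b <= s /\ s - b <= L) ->
  {in S &, forall s t : 'I_n, s < t -> s + d <= t} -> #|S| <= L %/ d + 1.
Proof.
move=> d0 HS Hsp.
pose g (s : 'I_n) : 'I_(L %/ d).+1 := inord ((s - b) %/ d).
have ginj : {in S &, injective g}.
  move=> s t Hs Ht /(congr1 val) /=.
  have [Hs1 Hs2] := HS s Hs; have [Ht1 Ht2] := HS t Ht.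
  rewrite !inordK; try by rewrite ltnS leq_div2r.
  move=> E; case: (ltngtP s t) => [lt|lt|/val_inj //].
  - have := Hsp s t Hs Ht lt.
    move=> H; have : (s - b + d) %/ d <= (t - b) %/ d by apply: leq_div2r; lia.
    rewrite -{1}(mul1n d) divnDMl // E; lia.
  - have := Hsp t s Ht Hs lt.
    move=> H; have : (t - b + d) %/ d <= (s - b) %/ d by apply: leq_div2r; lia.
    rewrite -{1}(mul1n d) divnDMl // E; lia.
rewrite -(card_in_imset ginj).
apply: leq_trans (max_card _) _; rewrite card_ord; lia.
Qed.

Lemma path_bound n k : odd_prime (gpower (path_graph n) k) ->
  (n + 1) %/ 3 <= (n - 1) %/ k.+1 + 1.
Proof.
case=> f [fb Hc].
have L3 := lower3 fb. apply: leq_trans L3 _.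
apply: (@spread n _ 0) => //.
  move=> s _; split => //; have := ltn_ord s; lia.
move=> s t; rewrite !inE => Hs Ht lt.
rewrite leqNgt; apply/negP => Hk.
have Hst : s != t by rewrite neq_ltn lt.
have : gpower (path_graph n) k s t.
  rewrite /gpower Hst /=; apply: (@within_mono _ _ (t - s)); first lia.
  by apply: within_path_fwd; lia.
by move/Hc; apply/negP/not_cop.
Qed.

Lemma cycle_bound n k : k + 2 <= n -> odd_prime (gpower (cycle_graph n) k) ->
  (n + 1) %/ 3 <= (n - k.+1) %/ k.+1 + 1.
Proof.
move=> Hn [f [fb Hc]].
apply: leq_trans (lower3 fb) _.
set S := [set i | _].
have cop (s t : 'I_n) : s \in S -> t \in S -> s != t -> ~~ within (cycle_graph n) k s t.
  rewrite !inE => Hs Ht Hst; apply/negP => W.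
  have : gpower (cycle_graph n) k s t by rewrite /gpower Hst.
  by move/Hc; apply/negP/not_cop.
case: (set_0Vmem S) => [->|[s0 Hs0]]; first by rewrite cards0.
case: (arg_minnP (fun i : 'I_n => nat_of_ord i) Hs0) => m Hm Hmin.
apply: (@spread n _ m) => //.
  move=> s Hs; have Hms := Hmin s Hs; split => //.
  case: (eqVneq s m) => [->|Hsm]; first lia.
  rewrite leqNgt; apply/negP => Hk.
  move/negP: (cop s m Hs Hm Hsm); apply.
  apply: (@within_mono _ _ (n - (s - m))); first lia.
  apply: within_cycle_fwd.
  rewrite (_ : s + (n - (s - m)) = 1 * n + m); last by have := ltn_ord s; lia.
  by rewrite modnMDl modn_small.
move=> s t Hs Ht lt.
rewrite leqNgt; apply/negP => Hk.
have Hst : s != t by rewrite neq_ltn lt.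
move/negP: (cop s t Hs Ht Hst); apply.
apply: (@within_mono _ _ (t - s)); first lia.
apply: within_cycle_fwd.
by rewrite (_ : s + (t - s) = t) ?modn_small //; lia.
Qed.

Lemma path_label n k (l : seq nat) : size l = n -> uniq l -> all (fun x => x < n) l ->
  all (fun i => all (fun j => (i != j) ==> (i - j <= k) ==> (j - i <= k) ==>
     coprime (2 * nth 0 l i + 1) (2 * nth 0 l j + 1)) (iota 0 n)) (iota 0 n) ->
  odd_prime (gpower (path_graph n) k).
Proof.
move=> Hs Hu Ha Hc.
have Hl (i : 'I_n) : nth 0 l i < #|'I_n|.
  by rewrite card_ord; apply: (allP Ha); rewrite mem_nth // Hs.
exists (fun i => Ordinal (Hl i)); split.
  apply: inj_card_bij; last by rewrite !card_ord.
  move=> i j /(congr1 val) /= /eqP; rewrite nth_uniq ?Hs // => /eqP; apply: ord_inj.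
move=> u v /andP [Huv /within_path_close /andP [H1 H2]] /=.
have := allP Hc u; rewrite mem_iota /= add0n ltn_ord => /(_ isT) /allP /(_ v).
rewrite mem_iota /= add0n ltn_ord => /(_ isT).
by rewrite H1 H2 Huv.
Qed.

Theorem theorem5p3 :
  (forall n : nat, 5 <= n ->
     (odd_prime (gpower (path_graph n) 3) <-> n \in [:: 5; 6; 7; 9; 10; 13])) /\
  (forall n : nat, 6 <= n ->
     (odd_prime (gpower (path_graph n) 4) <-> n \in [:: 6; 7])) /\
  (forall n : nat, 7 <= n ->
     (odd_prime (gpower (path_graph n) 5) <-> n = 7)) /\
  (forall k n : nat, 6 <= k -> k + 2 <= n ->
     ~ odd_prime (gpower (path_graph n) k)) /\
  (forall k n : nat, 3 <= k -> k + 2 <= n ->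
     ~ odd_prime (gpower (cycle_graph n) k)).
Proof.
split.
  move=> n Hn; split.
    move/path_bound => H.
    have Hn13 : n <= 13 by lia.
    have := (isT : all (fun n => ((n+1)%/3 <= (n-1)%/4 + 1) ==> (n \in [:: 5; 6; 7; 9; 10; 13])) (iota 5 9)).
    move/allP/(_ n); rewrite mem_iota H /=; apply; lia.
  rewrite !inE => /orP [/eqP->|/orP [/eqP->|/orP [/eqP->|/orP [/eqP->|/orP [/eqP->|/eqP->]]]]].
  - by apply: (@path_label _ _ [:: 1; 0; 2; 3; 4]); vm_compute.
  - by apply: (@path_label _ _ [:: 0; 1; 2; 3; 5; 4]); vm_compute.
  - by apply: (@path_label _ _ [:: 0; 1; 2; 3; 5; 4; 6]); vm_compute.
  - by apply: (@path_label _ _ [:: 1; 0; 2; 3; 4; 5; 6; 8; 7]); vm_compute.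
  - by apply: (@path_label _ _ [:: 0; 1; 2; 3; 5; 4; 6; 8; 9; 7]); vm_compute.
  - by apply: (@path_label _ _ [:: 1; 0; 2; 3; 4; 5; 6; 12; 10; 8; 9; 11; 7]); vm_compute.
split.
  move=> n Hn; split.
    move/path_bound => H.
    have Hn8 : n <= 8 by lia.
    have := (isT : all (fun n => ((n+1)%/3 <= (n-1)%/5 + 1) ==> (n \in [:: 6; 7])) (iota 6 3)).
    move/allP/(_ n); rewrite mem_iota H /=; apply; lia.
  rewrite !inE => /orP [/eqP->|/eqP->].
  - by apply: (@path_label _ _ [:: 1; 0; 2; 3; 5; 4]); vm_compute.
  - by apply: (@path_label _ _ [:: 0; 1; 2; 3; 5; 6; 4]); vm_compute.
split.
  move=> n Hn; split.
    move/path_bound => H; lia.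
  move=> ->; by apply: (@path_label _ _ [:: 1; 0; 2; 3; 5; 6; 4]); vm_compute.
split.
  move=> k n Hk Hn /path_bound H.
  have := leq_div2l (n-1) (isT : 0 < 7) (_ : 7 <= k.+1); lia.
move=> k n Hk Hn /(cycle_bound _ _ Hn) H.
have H1 : (n - k.+1) %/ k.+1 <= (n - 4) %/ k.+1 by apply: leq_div2r; lia.
have := leq_div2l (n-4) (isT : 0 < 4) (_ : 4 <= k.+1); lia.
Qed.
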